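(* Let $\mathfrak{o}$ be a compact discrete valuation ring with finite residue field $\mathbf{k}$ of odd characteristic, $\mathfrak{O}/\mathfrak{o}$ the unramified quadratic extension with residue field $\mathbf{K}$, and $\ell\in\mathbb{N}$. Let $\mathbf{G}$ be $\mathrm{GL}_d$ or $\mathrm{GU}_d$ with Lie algebra $\mathfrak{g}$, $d=d_1+d_2$, and let $\mathbf{G}_i$ ($\mathrm{GL}_{d_i}$, resp. $\mathrm{GU}_{d_i}$) with Lie algebra $\mathfrak{g}_i$ be embedded block-diagonally via $j:\mathfrak{g}_1\oplus\mathfrak{g}_2\hookrightarrow\mathfrak{g}$, $j(X_1,X_2)=\mathrm{diag}(X_1,X_2)$, and $\mathbf{G}_1\times\mathbf{G}_2\hookrightarrow\mathbf{G}$. Let $\xi=j(\xi_1,\xi_2)\in\mathfrak{g}(\mathbf{k})$ with $\xi_i\in\mathfrak{g}_i(\mathbf{k})$ such that the characteristic polynomials of $\xi_1$ and $\xi_2$ are coprime in $\mathbf{K}[t]$. Then: (1) every $\tilde\xi\in\mathfrak{g}(\mathfrak{o}_\ell)$ reducing to $\xi$ modulo $\pi$ is $\mathrm{Ad}(\mathbf{G}(\mathfrak{o}_\ell))$-conjugate to an element $j(\tilde\xi_1,\tilde\xi_2)$ with $\tilde\xi_i\in\mathfrak{g}_i(\mathfrak{o}_\ell)$ reducing to $\xi_i$; (2) two such lifts $j(\tilde\xi_1,\tilde\xi_2)$ and $j(\tilde\eta_1,\tilde\eta_2)$ of $\xi$ are $\mathbf{G}(\mathfrak{o}_\ell)$-conjugate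 if and only if $\tilde\xi_i$ and $\tilde\eta_i$ are $\mathbf{G}_i(\mathfrak{o}_\ell)$-conjugate for $i=1,2$; moreover for $\tilde\xi=j(\tilde\xi_1,\tilde\xi_2)$, $$Z_{\mathbf{G}(\mathfrak{o}_\ell)}(\tilde\xi)=Z_{\mathbf{G}(\mathfrak{o}_\ell)}(\tilde\xi)\cap j(\mathbf{G}_1(\mathfrak{o}_\ell)\times\mathbf{G}_2(\mathfrak{o}_\ell))\cong Z_{\mathbf{G}_1(\mathfrak{o}_\ell)}(\tilde\xi_1)\times Z_{\mathbf{G}_2(\mathfrak{o}_\ell)}(\tilde\xi_2).$$ Consequently, there is a bijection between the $\mathrm{Ad}(\mathbf{G}(\mathfrak{o}_\ell))$-orbits in $\mathfrak{g}(\mathfrak{o}_\ell)$ lying over $\xi$ and pairs consisting of an $\mathrm{Ad}(\mathbf{G}_1(\mathfrak{o}_\ell))$-orbit in $\mathfrak{g}_1(\mathfrak{o}_\ell)$ lying over $\xi_1$ and an $\mathrm{Ad}(\mathbf{G}_2(\mathfrak{o}_\ell))$-orbit in $\mathfrak{g}_2(\mathfrak{o}_\ell)$ lying over $\xi_2$.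
   Context: $\pi$ is a uniformiser of $\mathfrak{o}$, $\mathfrak{o}_\ell=\mathfrak{o}/\pi^\ell\mathfrak{o}$, $\mathfrak{O}_\ell=\mathfrak{O}/\pi^\ell\mathfrak{O}$, and $x\mapsto x^\circ$ is the nontrivial Galois automorphism of $\mathfrak{O}/\mathfrak{o}$. Here unitary groups are taken with respect to the standard Hermitian involution $A\mapsto (a^\circ_{j,i})$, which preserves block-diagonal matrices: $\mathrm{GU}_n(\mathfrak{o}_\ell)=\{A\in\mathrm{GL}_n(\mathfrak{O}_\ell): (a^\circ_{j,i})A=I\}$ and $\mathfrak{gu}_n(\mathfrak{o}_\ell)=\{A\in\mathfrak{gl}_n(\mathfrak{O}_\ell): A+(a^\circ_{j,i})=0\}$. ''Lying over'' means reducing modulo $\pi$ to the given element. $Z$ denotes centraliser under conjugation. *)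

(* Defs.v *)
From HB Require Import structures.
From mathcomp Require Import all_boot all_order all_algebra.
Set Implicit Arguments. Unset Strict Implicit. Unset Printing Implicit Defensive.
Import GRing.Theory.
Local Open Scope ring_scope.

(* Elements of o_l = o/p^l o (resp. O_l) are represented by elements of o
   (resp. O); two representatives give the same element of the quotient iff
   their difference is divisible by p^l.  Matrices over o_l are represented by
   matrices over o, compared entrywise modulo p^l. *)

Definition pdvd (R : pzRingType) (p : R) (l : nat) (x : R) : Prop :=
  exists c : R, x = p ^+ l * c.

Definition congmx (R : pzRingType) (p : R) (l : nat) m n
  (A B : 'M[R]_(m, n)) : Prop :=
  forall i j, pdvd p l (A i j - B i j).

Definition inv_mod (R : pzRingType) (p : R) (l : nat) n (g h : 'M[R]_n) :=
  congmx p l (g *m h) 1%:M /\ congmx p l (h *m g) 1%:M.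

Definition is_dvr (R : idomainType) (p : R) : Prop :=
  [/\ p != 0, p \isn't a GRing.unit &
   forall x : R, x != 0 ->
     exists (n : nat) (u : R), u \is a GRing.unit /\ x = u * p ^+ n].

Definition is_complete (R : pzRingType) (p : R) : Prop :=
  forall s : nat -> R, (forall n, pdvd p n (s n.+1 - s n)) ->
    exists x : R, forall n, pdvd p n (x - s n).

Definition star (R : pzRingType) (s : R -> R) n (A : 'M[R]_n) : 'M[R]_n :=
  (map_mx s A)^T.

Definition GL_mem (R : pzRingType) (p : R) (l : nat) n (g : 'M[R]_n) : Prop :=
  exists h, inv_mod p l g h.
Definition gl_mem (R : pzRingType) (p : R) (l : nat) n (X : 'M[R]_n) : Prop :=
  True.
Definition GU_mem (R : pzRingType) (s : R -> R) (p : R) (l : nat) n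
  (g : 'M[R]_n) : Prop :=
  congmx p l (star s g *m g) 1%:M.
Definition gu_mem (R : pzRingType) (s : R -> R) (p : R) (l : nat) n
  (X : 'M[R]_n) : Prop :=
  congmx p l (X + star s X) 0.

Definition Adconj (R : pzRingType) (p : R) (l : nat)
  (inG : forall n, 'M[R]_n -> Prop) n (X Y : 'M[R]_n) : Prop :=
  exists g h, [/\ inG n g, inv_mod p l g h & congmx p l (g *m X *m h) Y].

Definition centralizes (R : pzRingType) (p : R) (l : nat) n (g X : 'M[R]_n)
  : Prop :=
  exists h, inv_mod p l g h /\ congmx p l (g *m X *m h) X.

(** The conclusion of the theorem for a given group scheme G (given by the
    predicates inG for G(o_l) and inLie for g(o_l) on matrices over R, the
    reduction map r : R -> K to the residue field, uniformiser p), for the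
    block embedding j(X1,X2) = block_mx X1 0 0 X2. *)
Definition levi_statement (R : pzRingType) (K : fieldType) (r : R -> K)
  (p : R) (l : nat) (inG inLie : forall n, 'M[R]_n -> Prop)
  (d1 d2 : nat) (xi1 : 'M[K]_d1) (xi2 : 'M[K]_d2) : Prop :=
  let over n (X : 'M[R]_n) (xi : 'M[K]_n) := inLie n X /\ map_mx r X = xi in
  let conj := Adconj p l inG in
  (forall X : 'M[R]_(d1 + d2), over _ X (block_mx xi1 0 0 xi2) ->
     exists (X1 : 'M[R]_d1) (X2 : 'M[R]_d2),
       [/\ over _ X1 xi1, over _ X2 xi2 & conj _ X (block_mx X1 0 0 X2)]) /\
  (forall (X1 Y1 : 'M[R]_d1) (X2 Y2 : 'M[R]_d2),
     over _ X1 xi1 -> over _ X2 xi2 -> over _ Y1 xi1 -> over _ Y2 xi2 ->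
     (conj _ (block_mx X1 0 0 X2) (block_mx Y1 0 0 Y2) <->
      conj _ X1 Y1 /\ conj _ X2 Y2)) /\
  (forall (X1 : 'M[R]_d1) (X2 : 'M[R]_d2), over _ X1 xi1 -> over _ X2 xi2 ->
     (forall g : 'M[R]_(d1 + d2), inG _ g ->
        centralizes p l g (block_mx X1 0 0 X2) ->
        exists (g1 : 'M[R]_d1) (g2 : 'M[R]_d2),
          [/\ inG _ g1, inG _ g2 & congmx p l g (block_mx g1 0 0 g2)]) /\
     (forall (g1 g1' : 'M[R]_d1) (g2 g2' : 'M[R]_d2),
        inG _ g1 -> inG _ g2 -> inG _ g1' -> inG _ g2' ->
        [/\ inG _ (block_mx g1 0 0 g2),
            (congmx p l (block_mx g1 0 0 g2) (block_mx g1' 0 0 g2') <->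
             congmx p l g1 g1' /\ congmx p l g2 g2') &
            (centralizes p l (block_mx g1 0 0 g2) (block_mx X1 0 0 X2) <->
             centralizes p l g1 X1 /\ centralizes p l g2 X2)])).

(* Main.v *)
Require Import Defs.
From HB Require Import structures.
From mathcomp Require Import all_boot all_order all_algebra.
Set Implicit Arguments. Unset Strict Implicit. Unset Printing Implicit Defensive.
Import GRing.Theory.
Local Open Scope ring_scope.

Section Cong.
Variables (R : idomainType) (p : R).

Lemma congmxP (l : nat) m n (A B : 'M[R]_(m, n)) :
  congmx p l A B <-> exists C, A - B = p ^+ l *: C.
Proof.
split.
- move=> H.
  have H' : forall i j, exists c, A i j - B i j == p ^+ l * c.
    by move=> i j; case: (H i j) => c ->; exists c.
  exists (\matrix_(i, j) xchoose (H' i j)).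
  apply/matrixP=> i j; rewrite !mxE.
  by apply/eqP; exact: (xchooseP (H' i j)).
- case=> C HC i j; exists (C i j).
  by have := congr1 (fun M : 'M[R]_(m, n) => M i j) HC; rewrite !mxE.
Qed.

Lemma cg_refl l m n (A : 'M[R]_(m, n)) : congmx p l A A.
Proof. by apply/congmxP; exists 0; rewrite subrr scaler0. Qed.

Lemma cg_eq l m n (A B : 'M[R]_(m, n)) : A = B -> congmx p l A B.
Proof. by move=> ->; apply: cg_refl. Qed.

Lemma cg_sym l m n (A B : 'M[R]_(m, n)) : congmx p l A B -> congmx p l B A.
Proof.
case/congmxP=> C HC; apply/congmxP; exists (- C).
by rewrite scalerN -HC opprB.
Qed.

Lemma cg_trans l m n (A B C : 'M[R]_(m, n)) :
  congmx p l A B -> congmx p l B C -> congmx p l A C.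
Proof.
case/congmxP=> D HD; case/congmxP=> E HE; apply/congmxP; exists (D + E).
by rewrite scalerDr -HD -HE addrA subrK.
Qed.

Lemma cg_add l m n (A A' B B' : 'M[R]_(m, n)) :
  congmx p l A A' -> congmx p l B B' -> congmx p l (A + B) (A' + B').
Proof.
case/congmxP=> D HD; case/congmxP=> E HE; apply/congmxP; exists (D + E).
by rewrite scalerDr -HD -HE opprD addrACA.
Qed.

Lemma cg_opp l m n (A A' : 'M[R]_(m, n)) :
  congmx p l A A' -> congmx p l (- A) (- A').
Proof.
case/congmxP=> D HD; apply/congmxP; exists (- D).
by rewrite scalerN -HD opprB opprK addrC.
Qed.

Lemma cg_sub l m n (A A' B B' : 'M[R]_(m, n)) :
  congmx p l A A' -> congmx p l B B' -> congmx p l (A - B) (A' - B').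
Proof. by move=> H1 H2; apply: cg_add => //; apply: cg_opp. Qed.

Lemma cg_scale l m n c (A A' : 'M[R]_(m, n)) :
  congmx p l A A' -> congmx p l (c *: A) (c *: A').
Proof.
case/congmxP=> D HD; apply/congmxP; exists (c *: D).
by rewrite -scalerBr HD !scalerA mulrC.
Qed.

Lemma cg_mull l m n k (A : 'M[R]_(m, n)) (B B' : 'M[R]_(n, k)) :
  congmx p l B B' -> congmx p l (A *m B) (A *m B').
Proof.
case/congmxP=> D HD; apply/congmxP; exists (A *m D).
by rewrite -mulmxBr HD scalemxAr.
Qed.

Lemma cg_mulr l m n k (A A' : 'M[R]_(m, n)) (B : 'M[R]_(n, k)) :
  congmx p l A A' -> congmx p l (A *m B) (A' *m B).
Proof.
case/congmxP=> D HD; apply/congmxP; exists (D *m B).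
by rewrite -mulmxBl HD scalemxAl.
Qed.

Lemma cg_mul l m n k (A A' : 'M[R]_(m, n)) (B B' : 'M[R]_(n, k)) :
  congmx p l A A' -> congmx p l B B' -> congmx p l (A *m B) (A' *m B').
Proof.
move=> H1 H2; apply: (cg_trans (cg_mulr _ H1)); exact: cg_mull.
Qed.

Lemma cg_le l l' m n (A B : 'M[R]_(m, n)) :
  (l' <= l)%N -> congmx p l A B -> congmx p l' A B.
Proof.
move=> Hle; case/congmxP=> D HD; apply/congmxP; exists (p ^+ (l - l') *: D).
by rewrite HD scalerA -exprD subnKC.
Qed.

Lemma cg_p l m n (C : 'M[R]_(m, n)) : congmx p l (p ^+ l *: C) 0.
Proof. by apply/congmxP; exists C; rewrite subr0. Qed.

Lemma cg_pscale k l m n (A B : 'M[R]_(m, n)) :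
  congmx p l A B -> congmx p (k + l) (p ^+ k *: A) (p ^+ k *: B).
Proof.
case/congmxP=> D HD; apply/congmxP; exists D.
by rewrite -scalerBr HD scalerA exprD.
Qed.

Lemma cg_block l m1 m2 n1 n2 (a a' : 'M[R]_(m1, n1)) (b b' : 'M[R]_(m1, n2))
  (c c' : 'M[R]_(m2, n1)) (d d' : 'M[R]_(m2, n2)) :
  congmx p l (block_mx a b c d) (block_mx a' b' c' d') <->
  [/\ congmx p l a a', congmx p l b b', congmx p l c c' & congmx p l d d'].
Proof.
split.
- case/congmxP=> D HD.
  rewrite -(submxK D) opp_block_mx add_block_mx scale_block_mx in HD.
  case/eq_block_mx: HD => H1 H2 H3 H4.
  by split; apply/congmxP; eexists; eassumption.
- case=> /congmxP[D1 H1] /congmxP[D2 H2] /congmxP[D3 H3] /congmxP[D4 H4].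
  apply/congmxP; exists (block_mx D1 D2 D3 D4).
  by rewrite opp_block_mx add_block_mx scale_block_mx H1 H2 H3 H4.
Qed.

Lemma cg_tr l m n (A B : 'M[R]_(m, n)) :
  congmx p l A B -> congmx p l A^T B^T.
Proof. by move=> H i j; rewrite !mxE. Qed.

End Cong.

Section Sylv.
Variables (R : idomainType) (K : fieldType) (r : {rmorphism R -> K}).
Hypothesis Hu : forall x, r x != 0 -> x \is a GRing.unit.

Lemma horner_mx_sum n (A : 'M[R]_n.+1) q :
  horner_mx A q = \sum_(i < size q) q`_i *: A ^+ i.
Proof.
rewrite /horner_mx /horner_morph horner_coef.
rewrite size_map_inj_poly; last 2 first.
- by move=> a b /matrixP /(_ ord0 ord0); rewrite !mxE.
- by apply/matrixP=> i j; rewrite !mxE mul0rn.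
apply: eq_bigr => i _; rewrite coef_map /= -mul_scalar_mx mulmxE //.
Qed.

Section Fixed.
Variables (n m : nat) (A : 'M[R]_n.+1) (B : 'M[R]_m.+1).

Definition SY (Y : 'M[R]_(n.+1, m.+1)) := A *m Y - Y *m B.

Fixpoint Tk k (C : 'M[R]_(n.+1, m.+1)) : 'M[R]_(n.+1, m.+1) :=
  match k with 0 => 0 | k'.+1 => A *m Tk k' C + C *m B ^+ k' end.

Lemma Tk_S k Y : A ^+ k *m Y - Y *m B ^+ k = Tk k (SY Y).
Proof.
elim: k => [|k IH] /=; first by rewrite !expr0 mul1mx mulmx1 subrr.
rewrite -IH /SY exprS exprSr mulmxBr mulmxBl !mulmxA -!mulmxE.
rewrite -!(mulmxA Y).
have -> : B ^+ k *m B = B *m B ^+k by rewrite mulmxE -exprSr exprS.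
by rewrite addrA subrK.
Qed.

Lemma SY_Tk k C : SY (Tk k C) = Tk k (SY C).
Proof.
elim: k => [|k IH] /=; first by rewrite /SY mulmx0 mul0mx subrr.
rewrite -IH /SY mulmxDr mulmxDl mulmxBl mulmxBr !mulmxA -!(mulmxA C).
have -> : B ^+ k *m B = B *m B ^+k by rewrite mulmxE -exprSr exprS.
by rewrite opprD !addrA; congr (_ + _); rewrite addrAC.
Qed.

Lemma Tk_scale k c C : Tk k (c *: C) = c *: Tk k C.
Proof.
elim: k => [|k IH] /=; first by rewrite scaler0.
by rewrite IH scalerDr scalemxAr scalemxAl.
Qed.

Lemma SY_scale c C : SY (c *: C) = c *: SY C.
Proof. by rewrite /SY scalerBr scalemxAr scalemxAl. Qed.

Definition Wq (q : {poly R}) C := \sum_(i < size q) q`_i *: Tk i C.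

Lemma Wq_SY q Y : Wq q (SY Y) = horner_mx A q *m Y - Y *m horner_mx B q.
Proof.
rewrite /Wq !horner_mx_sum mulmx_suml mulmx_sumr -sumrB.
apply: eq_bigr => i _; rewrite -Tk_S scalerBr scalemxAl scalemxAr //.
Qed.

Lemma SY_Wq q C : SY (Wq q C) = Wq q (SY C).
Proof.
rewrite /Wq /SY mulmx_sumr mulmx_suml -sumrB; apply: eq_bigr => i _.
rewrite -scalemxAr -scalemxAl -scalerBr; congr (_ *: _); exact: SY_Tk.
Qed.

Lemma Wq_scale q c C : Wq q (c *: C) = c *: Wq q C.
Proof.
rewrite /Wq scaler_sumr; apply: eq_bigr => i _.
by rewrite Tk_scale !scalerA mulrC.
Qed.

End Fixed.

Section Fixed2.
Variables (n m : nat) (A : 'M[R]_n.+1) (B : 'M[R]_m.+1).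
Hypothesis Hcop : coprimep (char_poly (map_mx r A)) (char_poly (map_mx r B)).

Let Q := horner_mx B (char_poly A).

Lemma Q_unit : Q \in unitmx.
Proof.
rewrite unitmxE; apply: Hu; rewrite -det_map_mx map_horner_mx map_char_poly.
case/Bezout_eq1_coprimepP: Hcop => [[u v]] /= Huv.
have := congr1 (horner_mx (map_mx r B)) Huv.
rewrite rmorphD !rmorphM /= Cayley_Hamilton mulr0 addr0 rmorph1 => H.
have := congr1 determinant H; rewrite -mulmxE det_mulmx det1 => Hd.
by apply/eqP => H0; move: Hd; rewrite H0 mulr0 => /eqP; rewrite eq_sym oner_eq0.
Qed.

Lemma Q_comm : B *m invmx Q = invmx Q *m B.
Proof.
have QU := Q_unit.
have HBQ : B *m Q = Q *m B by have := comm_mx_horner (char_poly A) (erefl (B *m B)).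
by rewrite -[RHS](mulmxK QU) -(mulmxA (invmx Q) B Q) HBQ mulKmx.
Qed.

Definition Tinv C := - (Wq A B (char_poly A) C *m invmx Q).

Lemma Tinv_l Y : Tinv (SY A B Y) = Y.
Proof.
rewrite /Tinv Wq_SY Cayley_Hamilton mul0mx sub0r mulNmx opprK.
by change (Y *m Q *m invmx Q = Y); rewrite mulmxK // Q_unit.
Qed.

Lemma Tinv_r C : SY A B (Tinv C) = C.
Proof.
rewrite /Tinv /SY mulmxN mulNmx opprK mulmxA.
set W := Wq A B (char_poly A) C.
rewrite -(mulmxA W) -Q_comm mulmxA -mulNmx -mulmxDl addrC -opprB mulNmx.
rewrite -/(SY A B W) /W SY_Wq Wq_SY Cayley_Hamilton mul0mx sub0r mulNmx opprK.
by change (C *m Q *m invmx Q = C); rewrite mulmxK // Q_unit.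
Qed.

Lemma Tinv_scale c C : Tinv (c *: C) = c *: Tinv C.
Proof. by rewrite /Tinv Wq_scale -scalemxAl scalerN. Qed.

End Fixed2.

Lemma sylvester n m (A : 'M[R]_n) (B : 'M[R]_m) :
  coprimep (char_poly (map_mx r A)) (char_poly (map_mx r B)) ->
  exists T : 'M[R]_(n, m) -> 'M[R]_(n, m),
    [/\ forall Y, T (A *m Y - Y *m B) = Y,
        forall C, A *m T C - T C *m B = C &
        forall c C, T (c *: C) = c *: T C].
Proof.
case: n A => [|n] A.
  by move=> _; exists (fun _ => 0); split => *; rewrite ?flatmx0 // scaler0.
case: m B => [|m] B.
  by move=> _; exists (fun _ => 0); split => *; rewrite ?thinmx0 // scaler0.
move=> Hc; exists (Tinv A B); split.
- by move=> Y; apply: Tinv_l.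
- by move=> C; apply: Tinv_r.
- by move=> c C; apply: Tinv_scale.
Qed.

Lemma syl_inj (p : R) l n m (A : 'M[R]_n) (B : 'M[R]_m) (Y : 'M[R]_(n, m)) :
  coprimep (char_poly (map_mx r A)) (char_poly (map_mx r B)) ->
  congmx p l (A *m Y - Y *m B) 0 -> congmx p l Y 0.
Proof.
case/sylvester => T [T1 T2 T3] /congmxP [C HC].
apply/congmxP; exists (T C); rewrite subr0 -T3 -HC subr0 T1 //.
Qed.

Lemma syl_solve n m (A : 'M[R]_n) (B : 'M[R]_m) (C : 'M[R]_(n, m)) :
  coprimep (char_poly (map_mx r A)) (char_poly (map_mx r B)) ->
  exists Y, A *m Y - Y *m B = C.
Proof. by case/sylvester => T [T1 T2 T3]; exists (T C). Qed.

End Sylv.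

Section Gen.
Variables (R : idomainType) (K : fieldType) (r : {rmorphism R -> K}) (p : R).
Hypothesis Hu : forall x, r x != 0 -> x \is a GRing.unit.
Hypothesis Hk : forall x, r x = 0 -> pdvd p 1 x.
Hypothesis Hp : r p = 0.
Hypothesis H2 : (2 : R) \is a GRing.unit.

Lemma zid (V : zmodType) (X u v w : V) : X + u + (- v + - w) - (X + (u - v)) = - w.
Proof.
rewrite opprD addrA (addrAC (X + u)) (addrAC X) subrr add0r opprB.
by rewrite addrC addrA subrK addNKr.
Qed.

Lemma red_cg m n (A B : 'M[R]_(m, n)) : congmx p 1 A B -> map_mx r A = map_mx r B.
Proof.
case/congmxP=> C HC; apply/eqP; rewrite -subr_eq0 -map_mxB HC map_mxZ.
by rewrite rmorphXn Hp expr0n /= scale0r.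
Qed.

Lemma red0_cg m n (A : 'M[R]_(m, n)) : map_mx r A = 0 -> congmx p 1 A 0.
Proof.
move=> H i j; rewrite mxE subr0; apply: Hk.
by have := congr1 (fun M : 'M[K]_(m, n) => M i j) H; rewrite !mxE.
Qed.

Lemma unit_red1 n (M : 'M[R]_n) : map_mx r M = 1%:M -> M \in unitmx.
Proof.
move=> H; rewrite unitmxE; apply: Hu; rewrite -det_map_mx H det1.
exact: oner_neq0.
Qed.

Lemma cg_addp k m n (A W : 'M[R]_(m, n)) : (0 < k)%N -> congmx p 1 (A + p ^+ k *: W) A.
Proof.
move=> Hk0; apply/congmxP; exists (p ^+ k.-1 *: W).
by rewrite addrC addKr scalerA -exprD add1n prednK.
Qed.

Definition cay n (M : 'M[R]_n) := (1%:M + M) *m invmx (1%:M - M).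

Lemma cay_inv n (M : 'M[R]_n) : map_mx r M = 0 ->
  cay M *m cay (- M) = 1%:M /\ cay (- M) *m cay M = 1%:M.
Proof.
move=> HM.
have UU : (1%:M - M) \in unitmx by apply: unit_red1; rewrite map_mxB HM map_mx1 subr0.
have VU : (1%:M + M) \in unitmx by apply: unit_red1; rewrite map_mxD HM map_mx1 addr0.
rewrite /cay opprK; split.
- by rewrite mulmxA mulmxKV // mulmxV.
- by rewrite mulmxA mulmxKV // mulmxV.
Qed.

Definition half : R := 2^-1.

Lemma half2 : half + half = 1.
Proof. by rewrite -mulr2n -mulr_natr mulVr. Qed.

Lemma cay_approx k n (N : 'M[R]_n) : (0 < k)%N ->
  congmx p k.+1 (cay ((p ^+ k * half) *: N)) (1%:M + p ^+ k *: N).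
Proof.
move=> Hk0; set c := p ^+ k * half; set M := c *: N.
have HM : map_mx r M = 0.
  by rewrite map_mxZ rmorphM rmorphXn Hp expr0n /= gtn_eqF // mul0r scale0r.
have UU : (1%:M - M) \in unitmx by apply: unit_red1; rewrite map_mxB HM map_mx1 subr0.
have HM2 : M + M = p ^+ k *: N by rewrite /M -scalerDl /c -mulrDr half2 mulr1.
have E1 : 1%:M + M = (1%:M + (M + M)) *m (1%:M - M) + (M + M) *m M.
  rewrite mulmxDl -addrA -mulmxDr subrK mulmx1 mul1mx.
  by rewrite addrA subrK.
apply/congmxP; exists (p ^+ k.-1 *: (half *: (N *m N *m invmx (1%:M - M)))).
rewrite /cay E1 mulmxDl mulmxK // HM2 addrC addKr.
rewrite -!scalemxAl /M -scalemxAr -scalemxAl !scalerA; congr (_ *: _).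
by rewrite /c mulrA -!exprD addSnnS prednK.
Qed.

Lemma conj_approx k n (N X : 'M[R]_n) : (0 < k)%N ->
  congmx p k.+1 (cay ((p ^+ k * half) *: N) *m X *m cay (- ((p ^+ k * half) *: N)))
                (X + p ^+ k *: (N *m X - X *m N)).
Proof.
move=> Hk0.
have H1 := cay_approx N Hk0.
have H2' := cay_approx (- N) Hk0; rewrite scalerN in H2'.
apply: cg_trans (cg_mul (cg_mul H1 (cg_refl _ _ X)) H2') _.
apply/congmxP; exists (- (p ^+ k.-1 *: (N *m X *m N))).
set a := p ^+ k.
have E : (1%:M + a *: N) *m X *m (1%:M + a *: - N) =
   X + a *: (N *m X) + (- (a *: (X *m N)) + - ((a * a) *: (N *m X *m N))).
  rewrite mulmxDl mul1mx -scalemxAl mulmxDr mulmx1 mulmxDl -!scalemxAr -scalemxAl.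
  by rewrite scalerA !mulmxN !scalerN.
rewrite E scalerBr zid scalerN scalerA -exprD /a -exprD.
by rewrite addSnnS prednK.
Qed.


Lemma cg_zero_ex l m n (A : 'M[R]_(m, n)) : congmx p l A 0 -> exists C, A = p ^+ l *: C.
Proof. by case/congmxP=> C; rewrite subr0 => ->; exists C. Qed.

Lemma block_step k d1 d2 (A : 'M[R]_d1) (B : 'M[R]_d2) C D Y Z : (0 < k)%N ->
  congmx p 1 (A *m Y - Y *m B) C -> congmx p 1 (B *m Z - Z *m A) D ->
  exists A' B' C' D',
    [/\ cay ((p ^+ k * half) *: block_mx 0 Y Z 0) *m
          block_mx A (p ^+ k *: C) (p ^+ k *: D) B *m
          cay (- ((p ^+ k * half) *: block_mx 0 Y Z 0))
        = block_mx A' (p ^+ k.+1 *: C') (p ^+ k.+1 *: D') B',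
        congmx p 1 A' A & congmx p 1 B' B].
Proof.
move=> Hk0 HC HD.
have H := conj_approx (block_mx 0 Y Z 0) (block_mx A (p ^+ k *: C) (p ^+ k *: D) B) Hk0.
set X' := _ *m _ *m _ in H *.
rewrite -(submxK X') !mulmx_block !mul0mx !mulmx0 !add0r !addr0 in H.
rewrite opp_block_mx add_block_mx scale_block_mx add_block_mx in H.
case/cg_block: H => J1 J2 J3 J4.
have [C' HC'] : exists C', ursubmx X' = p ^+ k.+1 *: C'.
  apply: cg_zero_ex; apply: (cg_trans J2).
  have -> : p ^+ k *: C + p ^+ k *: (Y *m B - A *m Y) = p ^+ k *: (C - (A *m Y - Y *m B)).
    by rewrite -scalerDr opprB.
  rewrite -[0](scaler0 _ (p ^+ k)) -addn1; apply: cg_pscale.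
  by rewrite -[0](subrr C); apply: cg_sub; [apply: cg_refl | exact: HC].
have [D' HD'] : exists D', dlsubmx X' = p ^+ k.+1 *: D'.
  apply: cg_zero_ex; apply: (cg_trans J3).
  have -> : p ^+ k *: D + p ^+ k *: (Z *m A - B *m Z) = p ^+ k *: (D - (B *m Z - Z *m A)).
    by rewrite -scalerDr opprB.
  rewrite -[0](scaler0 _ (p ^+ k)) -addn1; apply: cg_pscale.
  by rewrite -[0](subrr D); apply: cg_sub; [apply: cg_refl | exact: HD].
exists (ulsubmx X'), (drsubmx X'), C', D'; split.
- by rewrite -HC' -HD' submxK.
- apply: cg_trans (cg_addp _ _ Hk0); exact: cg_le J1.
- apply: cg_trans (cg_addp _ _ Hk0); exact: cg_le J4.
Qed.

End Gen.

Lemma mul_diag_block (R : pzRingType) m1 m2 n1 n2 k1 k2 (a : 'M[R]_(m1, n1)) (b : 'M[R]_(m2, n2))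
  (c : 'M[R]_(n1, k1)) (d : 'M[R]_(n2, k2)) :
  block_mx a 0 0 b *m block_mx c 0 0 d = block_mx (a *m c) 0 0 (b *m d).
Proof. by rewrite mulmx_block !mulmx0 !mul0mx !addr0 !add0r. Qed.

Section Levi.
Variables (R : idomainType) (K : fieldType) (r : {rmorphism R -> K}) (p : R) (l : nat).
Hypothesis Hu : forall x, r x != 0 -> x \is a GRing.unit.
Hypothesis Hk : forall x, r x = 0 -> pdvd p 1 x.
Hypothesis Hp : r p = 0.
Hypothesis H2 : (2 : R) \is a GRing.unit.
Hypothesis Hl : (0 < l)%N.
Variables (d1 d2 : nat) (xi1 : 'M[K]_d1) (xi2 : 'M[K]_d2).
Hypothesis Hcop : coprimep (char_poly xi1) (char_poly xi2).

Lemma cop12 (A : 'M[R]_d1) (B : 'M[R]_d2) : map_mx r A = xi1 -> map_mx r B = xi2 ->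
  coprimep (char_poly (map_mx r A)) (char_poly (map_mx r B)).
Proof. by move=> -> ->. Qed.

Lemma cop21 (A : 'M[R]_d1) (B : 'M[R]_d2) : map_mx r A = xi1 -> map_mx r B = xi2 ->
  coprimep (char_poly (map_mx r B)) (char_poly (map_mx r A)).
Proof. by move=> -> ->; rewrite coprimep_sym. Qed.

Lemma conj_fwd (X1 Y1 : 'M[R]_d1) (X2 Y2 : 'M[R]_d2) (g h : 'M[R]_(d1 + d2)) :
  map_mx r X1 = xi1 -> map_mx r Y1 = xi1 -> map_mx r X2 = xi2 -> map_mx r Y2 = xi2 ->
  inv_mod p l g h ->
  congmx p l (g *m block_mx X1 0 0 X2 *m h) (block_mx Y1 0 0 Y2) ->
  congmx p l g (block_mx (ulsubmx g) 0 0 (drsubmx g)) /\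
  congmx p l h (block_mx (ulsubmx h) 0 0 (drsubmx h)).
Proof.
move=> rX1 rY1 rX2 rY2 [Hgh Hhg] Hc.
set bX := block_mx X1 0 0 X2; set bY := block_mx Y1 0 0 Y2.
have E1 : congmx p l (g *m bX) (bY *m g).
  apply: (@cg_trans _ _ _ _ _ _ (g *m bX *m (h *m g))).
    by rewrite -{1}[g *m bX]mulmx1; apply: cg_mull; apply: cg_sym.
  by rewrite mulmxA; apply: cg_mulr.
have E2 : congmx p l (h *m bY) (bX *m h).
  apply: (@cg_trans _ _ _ _ _ _ (h *m (g *m bX *m h))).
    by apply: cg_mull; apply: cg_sym.
  have := cg_mulr h (cg_mulr bX Hhg); rewrite mul1mx !mulmxA //.
split.
- rewrite -{1}(submxK g); apply/cg_block; split; try exact: cg_refl.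
  + apply: (syl_inj Hu (cop12 rY1 rX2)).
    rewrite -(submxK g) /bX /bY !mulmx_block in E1.
    case/cg_block: E1 => _ E _ _.
    rewrite !mulmx0 !mul0mx !add0r !addr0 in E *.
    by rewrite -(subrr (ursubmx g *m X2)); apply: cg_sub; [apply: cg_sym|apply: cg_refl].
  + apply: (syl_inj Hu (cop21 rX1 rY2)).
    rewrite -(submxK g) /bX /bY !mulmx_block in E1.
    case/cg_block: E1 => _ _ E _.
    rewrite !mulmx0 !mul0mx !add0r !addr0 in E *.
    by rewrite -(subrr (dlsubmx g *m X1)); apply: cg_sub; [apply: cg_sym|apply: cg_refl].
- rewrite -{1}(submxK h); apply/cg_block; split; try exact: cg_refl.
  + apply: (syl_inj Hu (cop12 rX1 rY2)).
    rewrite -(submxK h) /bX /bY !mulmx_block in E2.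
    case/cg_block: E2 => _ E _ _.
    rewrite !mulmx0 !mul0mx !add0r !addr0 in E *.
    by rewrite -(subrr (ursubmx h *m Y2)); apply: cg_sub; [apply: cg_sym|apply: cg_refl].
  + apply: (syl_inj Hu (cop21 rY1 rX2)).
    rewrite -(submxK h) /bX /bY !mulmx_block in E2.
    case/cg_block: E2 => _ _ E _.
    rewrite !mulmx0 !mul0mx !add0r !addr0 in E *.
    by rewrite -(subrr (dlsubmx h *m Y1)); apply: cg_sub; [apply: cg_sym|apply: cg_refl].
Qed.

Lemma conj_split m1 m2 (X1 Y1 g1 h1 : 'M[R]_m1) (X2 Y2 g2 h2 : 'M[R]_m2) (g h : 'M[R]_(m1 + m2)) :
  inv_mod p l g h -> congmx p l (g *m block_mx X1 0 0 X2 *m h) (block_mx Y1 0 0 Y2) ->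
  congmx p l g (block_mx g1 0 0 g2) -> congmx p l h (block_mx h1 0 0 h2) ->
  [/\ inv_mod p l g1 h1, inv_mod p l g2 h2,
      congmx p l (g1 *m X1 *m h1) Y1 & congmx p l (g2 *m X2 *m h2) Y2].
Proof.
move=> [Hgh Hhg] Hc Hg Hh.
have E1 : congmx p l (block_mx g1 0 0 g2 *m block_mx h1 0 0 h2) (block_mx 1%:M 0 0 1%:M).
  rewrite -scalar_mx_block; apply: cg_trans Hgh; apply: cg_sym; exact: cg_mul.
have E2 : congmx p l (block_mx h1 0 0 h2 *m block_mx g1 0 0 g2) (block_mx 1%:M 0 0 1%:M).
  rewrite -scalar_mx_block; apply: cg_trans Hhg; apply: cg_sym; exact: cg_mul.
have E3 : congmx p l (block_mx g1 0 0 g2 *m block_mx X1 0 0 X2 *m block_mx h1 0 0 h2)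
                     (block_mx Y1 0 0 Y2).
  apply: cg_trans Hc; apply: cg_sym; apply: cg_mul => //; apply: cg_mul => //; exact: cg_refl.
rewrite !mul_diag_block in E1 E2 E3.
case/cg_block: E1 => ? _ _ ?; case/cg_block: E2 => ? _ _ ?; case/cg_block: E3 => ? _ _ ?.
by split => //; split.
Qed.

Lemma conj_join m1 m2 (X1 Y1 g1 h1 : 'M[R]_m1) (X2 Y2 g2 h2 : 'M[R]_m2) :
  inv_mod p l g1 h1 -> inv_mod p l g2 h2 ->
  congmx p l (g1 *m X1 *m h1) Y1 -> congmx p l (g2 *m X2 *m h2) Y2 ->
  inv_mod p l (block_mx g1 0 0 g2) (block_mx h1 0 0 h2) /\
  congmx p l (block_mx g1 0 0 g2 *m block_mx X1 0 0 X2 *m block_mx h1 0 0 h2)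
             (block_mx Y1 0 0 Y2).
Proof.
move=> [A1 A2] [B1 B2] C1 C2; rewrite /inv_mod !mul_diag_block (scalar_mx_block m1 m2).
split; [split|]; apply/cg_block; split => //; exact: cg_refl.
Qed.

Variables (inG inLie : forall n, 'M[R]_n -> Prop).
Hypothesis G0 : forall n, inG (1%:M : 'M[R]_n).
Hypothesis G1 : forall n (g g' : 'M[R]_n), congmx p l g g' -> inG g -> inG g'.
Hypothesis G2 : forall n1 n2 (g1 : 'M[R]_n1) (g2 : 'M[R]_n2),
  inG (block_mx g1 0 0 g2) <-> inG g1 /\ inG g2.
Hypothesis Gmul : forall n (g g' : 'M[R]_n), inG g -> inG g' -> inG (g *m g').
Hypothesis L1 : forall n (X X' : 'M[R]_n), congmx p l X X' -> inLie X -> inLie X'.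
Hypothesis L2 : forall n1 n2 (X1 : 'M[R]_n1) (X2 : 'M[R]_n2),
  inLie (block_mx X1 0 0 X2) <-> inLie X1 /\ inLie X2.
Hypothesis L3 : forall n (g h X : 'M[R]_n), inG g -> inv_mod p l g h -> inLie X ->
  inLie (g *m X *m h).
Hypothesis HS : forall k (A : 'M[R]_d1) (B : 'M[R]_d2) C D Y Z, (0 < k)%N -> (k < l)%N ->
  map_mx r A = xi1 -> map_mx r B = xi2 ->
  inLie (block_mx A (p ^+ k *: C) (p ^+ k *: D) B) ->
  A *m Y - Y *m B = C -> B *m Z - Z *m A = D ->
  exists Z', inG (cay ((p ^+ k * half R) *: block_mx 0 Y Z' 0)) /\ congmx p 1 Z' Z.

Lemma part1_ind (X : 'M[R]_(d1 + d2)) : inLie X -> map_mx r X = block_mx xi1 0 0 xi2 ->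
  forall k, (0 < k)%N -> (k <= l)%N ->
  exists g h A B C D, [/\ g *m h = 1%:M /\ h *m g = 1%:M, inG g,
     g *m X *m h = block_mx A (p ^+ k *: C) (p ^+ k *: D) B,
     map_mx r A = xi1 & map_mx r B = xi2].
Proof.
move=> LX rX; elim=> [//|k IH] _ Hkl.
case: k IH Hkl => [|k] IH Hkl.
  have [C HC] : exists C, ursubmx X = p ^+ 1 *: C.
    apply: (cg_zero_ex (p := p)); apply: (red0_cg Hk).
    by rewrite map_ursubmx rX block_mxKur.
  have [D HD] : exists D, dlsubmx X = p ^+ 1 *: D.
    apply: (cg_zero_ex (p := p)); apply: (red0_cg Hk).
    by rewrite map_dlsubmx rX block_mxKdl.
  exists 1%:M, 1%:M, (ulsubmx X), (drsubmx X), C, D; split => //.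
  - by rewrite mulmx1.
  - by rewrite mulmx1 mul1mx -HC -HD submxK.
  - by rewrite map_ulsubmx rX block_mxKul.
  - by rewrite map_drsubmx rX block_mxKdr.
have [g [h [A [B [C [D [[Egh Ehg] Gg EX rA rB]]]]]]] := IH erefl (ltnW Hkl).
have [Y HY] := syl_solve Hu C (cop12 rA rB).
have [Z HZ] := syl_solve Hu D (cop21 rA rB).
have LX' : inLie (block_mx A (p ^+ k.+1 *: C) (p ^+ k.+1 *: D) B).
  rewrite -EX; apply: L3 => //; split; exact: cg_eq.
have [Z' [GZ HZ']] := HS (ltn0Sn k) Hkl rA rB LX' HY HZ.
have HZ2 : congmx p 1 (B *m Z' - Z' *m A) D.
  rewrite -HZ; apply: cg_sub; [apply: cg_mull | apply: cg_mulr] => //.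
have HY2 : congmx p 1 (A *m Y - Y *m B) C by rewrite HY; exact: cg_refl.
have [A' [B' [C' [D' [EX' rA' rB']]]]] := block_step Hu Hp H2 (ltn0Sn k) HY2 HZ2.
set M := (p ^+ k.+1 * half R) *: block_mx 0 Y Z' 0 in GZ EX'.
have HM : map_mx r M = 0.
  by rewrite /M map_mxZ rmorphM rmorphXn Hp expr0n /= mul0r scale0r.
have [Ci1 Ci2] := cay_inv Hu HM.
exists (cay M *m g), (h *m cay (- M)), A', B', C', D'; split; first split.
- by rewrite mulmxA -(mulmxA _ g) Egh mulmx1 Ci1.
- by rewrite mulmxA -(mulmxA h) Ci2 mulmx1 Ehg.
- exact: Gmul.
- by rewrite -EX' -EX !mulmxA.
- by rewrite (red_cg Hp rA') rA.
- by rewrite (red_cg Hp rB') rB.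
Qed.

Lemma levi_gen : levi_statement r p l inG inLie xi1 xi2.
Proof.
rewrite /levi_statement /=; split; [|split].
- move=> X [LX rX].
  have [g [h [A [B [C [D [[Egh Ehg] Gg EX rA rB]]]]]]] := part1_ind LX rX Hl (leqnn l).
  have Ih : inv_mod p l g h by split; apply: cg_eq.
  have Hc : congmx p l (g *m X *m h) (block_mx A 0 0 B).
    rewrite EX; apply/cg_block; split; try exact: cg_refl; exact: cg_p.
  have LB := L1 Hc (L3 Gg Ih LX).
  case/L2: LB => LA LB'.
  exists A, B; split => //.
  by exists g, h; split.
- move=> X1 Y1 X2 Y2 [_ rX1] [_ rX2] [_ rY1] [_ rY2]; split.
  + case=> g [h [Gg Hinv Hc]].
    have [Eg Eh] := conj_fwd rX1 rY1 rX2 rY2 Hinv Hc.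
    have [i1 i2 c1 c2] := conj_split Hinv Hc Eg Eh.
    have /G2 [Gg1 Gg2] := G1 Eg Gg.
    by split; [exists (ulsubmx g), (ulsubmx h) | exists (drsubmx g), (drsubmx h)].
  + case=> [[g1 [h1 [Gg1 I1 C1]]] [g2 [h2 [Gg2 I2 C2]]]].
    have [I C] := conj_join I1 I2 C1 C2.
    exists (block_mx g1 0 0 g2), (block_mx h1 0 0 h2); split => //.
    by apply/G2.
- move=> X1 X2 [_ rX1] [_ rX2]; split.
  + move=> g Gg [h [Hinv Hc]].
    have [Eg Eh] := conj_fwd rX1 rX1 rX2 rX2 Hinv Hc.
    have /G2 [Gg1 Gg2] := G1 Eg Gg.
    by exists (ulsubmx g), (drsubmx g).
  + move=> g1 g1' g2 g2' Gg1 Gg2 _ _; split.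
    * by apply/G2.
    * split => [/cg_block [? ? ? ?] | [? ?]] //.
      by apply/cg_block; split => //; exact: cg_refl.
    * split.
      - case=> h [Hinv Hc].
        have [Eg Eh] := conj_fwd rX1 rX1 rX2 rX2 Hinv Hc.
        rewrite block_mxKul block_mxKdr in Eg.
        have [i1 i2 c1 c2] := conj_split Hinv Hc Eg Eh.
        by split; [exists (ulsubmx h) | exists (drsubmx h)].
      - case=> [[h1 [I1 C1]] [h2 [I2 C2]]].
        have [I C] := conj_join I1 I2 C1 C2.
        by exists (block_mx h1 0 0 h2).
Qed.

End Levi.

Lemma dvr_props (R : idomainType) (K : fieldType) (r : {rmorphism R -> K}) (p : R) :
  is_dvr p -> r p = 0 ->
  (forall x, r x != 0 -> x \is a GRing.unit) /\ (forall x, r x = 0 -> pdvd p 1 x).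
Proof.
case=> pn0 pnu Hd Hp; split.
- move=> x rx.
  have x0 : x != 0 by apply: contraNneq rx => ->; rewrite rmorph0.
  case: (Hd x x0) => [[|n] [u [Uu Ex]]]; first by rewrite Ex expr0 mulr1.
  by rewrite Ex rmorphM rmorphXn Hp expr0n mulr0 eqxx in rx.
- move=> x rx; case: (eqVneq x 0) => [->|x0]; first by exists 0; rewrite mulr0.
  case: (Hd x x0) => [[|n] [u [Uu Ex]]].
  + rewrite Ex expr0 mulr1 in rx.
    by have := rmorph_unit r Uu; rewrite rx unitr0.
  + by exists (u * p ^+ n); rewrite Ex exprS expr1 mulrCA.
Qed.

Lemma two_unit (R : idomainType) (K : fieldType) (r : {rmorphism R -> K}) :
  (forall x, r x != 0 -> x \is a GRing.unit) -> ~~ (2%N \in [pchar K]) ->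
  (2 : R) \is a GRing.unit.
Proof.
move=> Hu Hc; apply: Hu; rewrite rmorph_nat.
by move: Hc; rewrite inE /=.
Qed.

Section GLinst.
Variables (R : idomainType) (p : R) (l : nat).

Lemma GL_block n1 n2 (g1 : 'M[R]_n1) (g2 : 'M[R]_n2) :
  GL_mem p l (block_mx g1 0 0 g2) <-> GL_mem p l g1 /\ GL_mem p l g2.
Proof.
split.
- case=> h [H1 H2].
  rewrite -(submxK h) mulmx_block !mul0mx !addr0 !add0r (scalar_mx_block n1 n2) in H1.
  rewrite -(submxK h) mulmx_block !mulmx0 !addr0 !add0r (scalar_mx_block n1 n2) in H2.
  case/cg_block: H1 => ? _ _ ?; case/cg_block: H2 => ? _ _ ?.
  by split; [exists (ulsubmx h) | exists (drsubmx h)].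
- case=> [[h1 [A1 A2]] [h2 [B1 B2]]]; exists (block_mx h1 0 0 h2).
  rewrite /inv_mod !mul_diag_block (scalar_mx_block n1 n2).
  by split; apply/cg_block; split => //; exact: cg_refl.
Qed.

Lemma GL_cong n (g g' : 'M[R]_n) : congmx p l g g' -> GL_mem p l g -> GL_mem p l g'.
Proof.
move=> Hg [h [H1 H2]]; exists h; split.
- by apply: cg_trans H1; apply: cg_mulr; apply: cg_sym.
- by apply: cg_trans H2; apply: cg_mull; apply: cg_sym.
Qed.

Lemma GL_mul n (g g' : 'M[R]_n) : GL_mem p l g -> GL_mem p l g' -> GL_mem p l (g *m g').
Proof.
move=> [h [H1 H2]] [h' [H1' H2']]; exists (h' *m h); split.
- rewrite mulmxA -(mulmxA g); apply: cg_trans H1; apply: cg_mulr.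
  by rewrite -[X in congmx _ _ _ X]mulmx1; apply: cg_mull.
- rewrite mulmxA -(mulmxA h'); apply: cg_trans H2'; apply: cg_mulr.
  by rewrite -[X in congmx _ _ _ X]mulmx1; apply: cg_mull.
Qed.

End GLinst.

Section GUinst.
Variables (R : idomainType) (s : {rmorphism R -> R}) (p : R) (l : nat).
Hypothesis Hs2 : forall y, s (s y) = y.
Hypothesis Hsp : s p = p.

Definition st m n (A : 'M[R]_(m, n)) : 'M[R]_(n, m) := (map_mx s A)^T.

Lemma st_mul m n k (A : 'M[R]_(m, n)) (B : 'M[R]_(n, k)) : st (A *m B) = st B *m st A.
Proof. by rewrite /st map_mxM trmx_mul. Qed.

Lemma st_add m n (A B : 'M[R]_(m, n)) : st (A + B) = st A + st B.
Proof. by apply/matrixP=> i j; rewrite !mxE rmorphD. Qed.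

Lemma st_opp m n (A : 'M[R]_(m, n)) : st (- A) = - st A.
Proof. by apply/matrixP=> i j; rewrite !mxE rmorphN. Qed.

Lemma st_sub m n (A B : 'M[R]_(m, n)) : st (A - B) = st A - st B.
Proof. by rewrite st_add st_opp. Qed.

Lemma st_scale m n c (A : 'M[R]_(m, n)) : st (c *: A) = s c *: st A.
Proof. by apply/matrixP=> i j; rewrite !mxE rmorphM. Qed.

Lemma st0 m n : st (0 : 'M[R]_(m, n)) = 0.
Proof. by apply/matrixP=> i j; rewrite !mxE rmorph0. Qed.

Lemma st1 n : st (1%:M : 'M[R]_n) = 1%:M.
Proof. by apply/matrixP=> i j; rewrite !mxE eq_sym rmorph_nat. Qed.

Lemma st_st m n (A : 'M[R]_(m, n)) : st (st A) = A.
Proof. by apply/matrixP=> i j; rewrite !mxE Hs2. Qed.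

Lemma st_block m1 m2 n1 n2 (a : 'M[R]_(m1, n1)) (b : 'M[R]_(m1, n2))
  (c : 'M[R]_(m2, n1)) (d : 'M[R]_(m2, n2)) :
  st (block_mx a b c d) = block_mx (st a) (st c) (st b) (st d).
Proof. by rewrite /st map_block_mx tr_block_mx. Qed.

Lemma cg_st k m n (A B : 'M[R]_(m, n)) : congmx p k A B -> congmx p k (st A) (st B).
Proof.
case/congmxP=> C HC; apply/congmxP; exists (st C).
by rewrite -st_sub HC st_scale rmorphXn Hsp.
Qed.

End GUinst.

Section GUinst2.
Variables (R : idomainType) (s : {rmorphism R -> R}) (p : R) (l : nat).
Hypothesis Hs2 : forall y, s (s y) = y.
Hypothesis Hsp : s p = p.
Local Notation st := (st s).

Lemma GU_memE n (g : 'M[R]_n) : GU_mem s p l g <-> congmx p l (st g *m g) 1%:M.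
Proof. by []. Qed.

Lemma GU_memEq n (g : 'M[R]_n) : GU_mem s p l g = congmx p l (st g *m g) 1%:M.
Proof. by []. Qed.

Lemma gu_memEq n (X : 'M[R]_n) : gu_mem s p l X = congmx p l (X + st X) 0.
Proof. by []. Qed.

Lemma gu_memE n (X : 'M[R]_n) : gu_mem s p l X <-> congmx p l (X + st X) 0.
Proof. by []. Qed.

Lemma GU_1 n : GU_mem s p l (1%:M : 'M[R]_n).
Proof. by apply/GU_memE; rewrite st1 mulmx1; apply: cg_refl. Qed.

Lemma GU_cong n (g g' : 'M[R]_n) : congmx p l g g' -> GU_mem s p l g -> GU_mem s p l g'.
Proof.
move=> Hg /GU_memE H; apply/GU_memE; apply: cg_trans H; apply: cg_mul; last exact: cg_sym.
by apply: cg_st => //; apply: cg_sym.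
Qed.

Lemma GU_block n1 n2 (g1 : 'M[R]_n1) (g2 : 'M[R]_n2) :
  GU_mem s p l (block_mx g1 0 0 g2) <-> GU_mem s p l g1 /\ GU_mem s p l g2.
Proof.
rewrite !GU_memEq st_block !st0 mul_diag_block (scalar_mx_block n1 n2).
split; first by case/cg_block.
by case=> ? ?; apply/cg_block; split => //; exact: cg_refl.
Qed.

Lemma GU_mul n (g g' : 'M[R]_n) : GU_mem s p l g -> GU_mem s p l g' -> GU_mem s p l (g *m g').
Proof.
move=> /GU_memE H /GU_memE H'; apply/GU_memE; rewrite st_mul.
rewrite mulmxA -(mulmxA _ (st g)); apply: cg_trans H'; apply: cg_mulr.
by rewrite -[X in congmx _ _ _ X]mulmx1; apply: cg_mull.
Qed.

Lemma GU_inv n (g h : 'M[R]_n) : GU_mem s p l g -> inv_mod p l g h -> congmx p l h (st g).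
Proof.
move=> /GU_memE H [H1 H2].
apply: (@cg_trans _ _ _ _ _ _ (st g *m g *m h)).
  by rewrite -{1}[h]mul1mx; apply: cg_mulr; apply: cg_sym.
by rewrite -mulmxA -[X in congmx _ _ _ X]mulmx1; apply: cg_mull.
Qed.

Lemma gu_cong n (X X' : 'M[R]_n) : congmx p l X X' -> gu_mem s p l X -> gu_mem s p l X'.
Proof.
move=> HX /gu_memE H; apply/gu_memE; apply: cg_trans H; apply: cg_add; apply: cg_sym => //.
exact: cg_st.
Qed.

Lemma gu_block n1 n2 (X1 : 'M[R]_n1) (X2 : 'M[R]_n2) :
  gu_mem s p l (block_mx X1 0 0 X2) <-> gu_mem s p l X1 /\ gu_mem s p l X2.
Proof.
rewrite !gu_memEq st_block !st0 add_block_mx !addr0 -(@block_mx0 R n1 n2 n1 n2).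
split; first by case/cg_block.
by case=> ? ?; apply/cg_block; split => //; exact: cg_refl.
Qed.

Lemma gu_conj n (g h X : 'M[R]_n) : GU_mem s p l g -> inv_mod p l g h -> gu_mem s p l X ->
  gu_mem s p l (g *m X *m h).
Proof.
move=> Gg Hgh /gu_memE HX; apply/gu_memE.
have Hh := GU_inv Gg Hgh.
have Hh' : congmx p l (st h) g by rewrite -[X in congmx _ _ _ X](st_st Hs2); exact: cg_st.
apply: (@cg_trans _ _ _ _ _ _ (g *m X *m st g + g *m st X *m st g)).
  apply: cg_add; first by apply: cg_mull.
  rewrite !st_mul mulmxA; apply: cg_mul; [exact: cg_mulr | exact: cg_refl].
rewrite -mulmxDl -mulmxDr -[X in congmx _ _ _ X](mul0mx _ (st g)).
apply: cg_mulr; rewrite -(mulmx0 _ g); exact: cg_mull.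
Qed.

End GUinst2.

Lemma cg_cancel (R : idomainType) (p : R) k l m n (E : 'M[R]_(m, n)) :
  p != 0 -> (k <= l)%N -> congmx p l (p ^+ k *: E) 0 -> congmx p (l - k) E 0.
Proof.
move=> pn0 Hkl /congmxP [F HF]; apply/congmxP; exists F.
rewrite subr0; rewrite subr0 -(subnKC Hkl) exprD -scalerA in HF.
apply/matrixP=> i j; have := congr1 (fun M : 'M[R]_(m, n) => M i j) HF.
rewrite !mxE; apply: mulfI; exact: expf_neq0.
Qed.

Lemma cg_sub0 (R : idomainType) (p : R) l m n (A B : 'M[R]_(m, n)) :
  congmx p l (A - B) 0 -> congmx p l A B.
Proof. by case/congmxP=> F HF; apply/congmxP; exists F; rewrite -HF subr0. Qed.

Lemma cg_add0 (R : idomainType) (p : R) l m n (A B : 'M[R]_(m, n)) :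
  congmx p l (A + B) 0 -> congmx p l B (- A).
Proof.
move=> H; apply: cg_sub0; rewrite opprK addrC; exact: H.
Qed.

Section GUinst3.
Variables (R : idomainType) (K : fieldType) (r : {rmorphism R -> K}).
Variables (s : {rmorphism R -> R}) (p : R) (l : nat).
Hypothesis Hs2 : forall y, s (s y) = y.
Hypothesis Hsp : s p = p.
Hypothesis Hu : forall x, r x != 0 -> x \is a GRing.unit.
Hypothesis Hp : r p = 0.
Hypothesis H2 : (2 : R) \is a GRing.unit.
Hypothesis pn0 : p != 0.
Local Notation st := (st s).

Lemma UV_comm n (M : 'M[R]_n) : (1%:M - M) *m (1%:M + M) = (1%:M + M) *m (1%:M - M).
Proof.
rewrite mulmxBl mulmxDl !mul1mx !mulmxDr !mulmx1 mulmxN.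
by rewrite opprD !addrA addrK subrK.
Qed.

Lemma cay_unitary n (M : 'M[R]_n) : map_mx r M = 0 -> st M = - M ->
  st (cay M) *m cay M = 1%:M.
Proof.
move=> HM SM.
have UU : (1%:M - M) \in unitmx by apply: (unit_red1 Hu); rewrite map_mxB HM map_mx1 subr0.
have VU : (1%:M + M) \in unitmx by apply: (unit_red1 Hu); rewrite map_mxD HM map_mx1 addr0.
have SV : st (1%:M + M) = 1%:M - M by rewrite st_add st1 SM.
have SU : st (1%:M - M) = 1%:M + M by rewrite st_sub st1 SM opprK.
have SI : st (invmx (1%:M - M)) = invmx (1%:M + M).
  have H : (1%:M + M) *m st (invmx (1%:M - M)) = 1%:M.
    by rewrite -SU -st_mul mulVmx // st1.
  by rewrite -[LHS](mulKmx VU) H mulmx1.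
rewrite /cay st_mul SI SV mulmxA -(mulmxA _ (1%:M - M)) UV_comm mulmxA mulVmx // mul1mx.
exact: mulmxV.
Qed.

Lemma half_s : s (half R) = half R.
Proof. by rewrite /half rmorphV // rmorph_nat. Qed.

Lemma GU_HS (d1 d2 : nat) (xi1 : 'M[K]_d1) (xi2 : 'M[K]_d2) :
  coprimep (char_poly xi1) (char_poly xi2) ->
  forall k (A : 'M[R]_d1) (B : 'M[R]_d2) C D Y Z, (0 < k)%N -> (k < l)%N ->
  map_mx r A = xi1 -> map_mx r B = xi2 ->
  gu_mem s p l (block_mx A (p ^+ k *: C) (p ^+ k *: D) B) ->
  A *m Y - Y *m B = C -> B *m Z - Z *m A = D ->
  exists Z', GU_mem s p l (cay ((p ^+ k * half R) *: block_mx 0 Y Z' 0)) /\ congmx p 1 Z' Z.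
Proof.
move=> Hcop k A B C D Y Z Hk0 Hkl rA rB LX HY HZ.
exists (- st Y); split.
  apply/GU_memE; apply: cg_eq; apply: cay_unitary.
    by rewrite map_mxZ rmorphM rmorphXn Hp expr0n /= gtn_eqF // mul0r scale0r.
  rewrite st_scale st_block !st0 st_opp (st_st Hs2) rmorphM rmorphXn Hsp half_s.
  by rewrite -scalerN opp_block_mx !oppr0 opprK.
rewrite gu_memEq st_block add_block_mx -(@block_mx0 R d1 d2 d1 d2) in LX.
case/cg_block: LX => La _ Lc Ld.
have SA : congmx p 1 (st A) (- A) by apply: cg_add0; apply: cg_le La; exact: ltn_trans Hk0 Hkl.
have SB : congmx p 1 (st B) (- B) by apply: cg_add0; apply: cg_le Ld; exact: ltn_trans Hk0 Hkl.
rewrite st_scale rmorphXn Hsp -scalerDr in Lc.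
have Lc' := cg_le (l' := 1) _ (cg_cancel pn0 (ltnW Hkl) Lc).
have SD : congmx p 1 D (- st C) by apply: cg_add0; rewrite addrC; apply: Lc'; rewrite subn_gt0.
have SC : congmx p 1 (st C) (st Y *m (- A) - (- B) *m st Y).
  rewrite -HY st_sub !st_mul; apply: cg_sub; [apply: cg_mull | apply: cg_mulr] => //.
have Key : congmx p 1 (B *m (- st Y) - (- st Y) *m A) D.
  apply: cg_sym; apply: cg_trans SD _.
  have -> : B *m (- st Y) - (- st Y) *m A = - (st Y *m (- A) - (- B) *m st Y).
    by rewrite !mulmxN !mulNmx !opprK opprD opprK addrC.
  exact: cg_opp.
apply: cg_sub0.
apply: (syl_inj Hu (cop21 Hcop rA rB)).
have -> : B *m (- st Y - Z) - (- st Y - Z) *m A =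
          (B *m (- st Y) - (- st Y) *m A) - (B *m Z - Z *m A).
  rewrite mulmxBr mulmxBl opprB addrC.
  by rewrite opprB addrACA [in RHS]addrACA (addrC (Z *m A)).
rewrite HZ -[X in congmx _ _ _ X](subrr D); apply: cg_sub => //; exact: cg_refl.
Qed.

End GUinst3.

Unset Implicit Arguments.

Theorem mainTheorem9
  (o O : idomainType) (K : finFieldType) (pi : o)
  (iota : {rmorphism o -> O}) (sigma : {rmorphism O -> O})
  (red : {rmorphism O -> K}) (l d1 d2 : nat)
  (xi1 : 'M[K]_d1) (xi2 : 'M[K]_d2) :
  (* o is a compact DVR with uniformiser pi *)
  is_dvr pi -> is_complete pi ->
  (* O/o is an unramified quadratic extension *)
  injective iota ->
  (exists e1 e2 : O, forall y : O,
     exists! ab : o * o, y = iota ab.1 * e1 + iota ab.2 * e2) ->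
  is_dvr (iota pi) ->
  (* sigma = x |-> x^o is the nontrivial Galois automorphism of O/o *)
  (forall x : o, sigma (iota x) = iota x) ->
  (forall y : O, sigma (sigma y) = y) ->
  (exists y : O, sigma y != y) ->
  (* red : O -> K = O / pi O is the residue map; K finite of odd char *)
  (forall k : K, exists y : O, red y = k) ->
  (forall y : O, red y = 0 <-> pdvd (iota pi) 1 y) ->
  ~~ (2%N \in [pchar K]) ->
  (0 < l)%N ->
  (* coprime characteristic polynomials in K[t] *)
  coprimep (char_poly xi1) (char_poly xi2) ->
  (* case G = GL_d *)
  ((exists X1 : 'M[o]_d1, map_mx (fun x => red (iota x)) X1 = xi1) ->
   (exists X2 : 'M[o]_d2, map_mx (fun x => red (iota x)) X2 = xi2) ->
   levi_statement (fun x => red (iota x)) pi l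
     (fun n (g : 'M[o]_n) => GL_mem pi l g)
     (fun n (X : 'M[o]_n) => gl_mem pi l X) xi1 xi2) /\
  (* case G = GU_d *)
  ((exists X1 : 'M[O]_d1, gu_mem sigma (iota pi) 1 X1 /\ map_mx red X1 = xi1) ->
   (exists X2 : 'M[O]_d2, gu_mem sigma (iota pi) 1 X2 /\ map_mx red X2 = xi2) ->
   levi_statement red (iota pi) l
     (fun n (g : 'M[O]_n) => GU_mem sigma (iota pi) l g)
     (fun n (X : 'M[O]_n) => gu_mem sigma (iota pi) l X) xi1 xi2).
Proof.
move=> dvr_o _ _ _ dvr_O sfix sinv _ _ redker char2 Hl Hcop.
have HpO : red (iota pi) = 0 by apply/redker; exists 1; rewrite expr1 mulr1.
have [HuO HkO] := dvr_props dvr_O HpO.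
have H2O := two_unit HuO char2.
have Hsp : sigma (iota pi) = iota pi := sfix pi.
have pn0O : iota pi != 0 by case: dvr_O.
split.
- move=> _ _.
  pose rr : {rmorphism o -> K} := red \o iota.
  have Hpo : rr pi = 0 := HpO.
  have [Huo Hko] := dvr_props dvr_o Hpo.
  have H2o := two_unit Huo char2.
  apply: (@levi_gen o K rr pi l Huo Hko Hpo H2o Hl d1 d2 xi1 xi2 Hcop
            (fun n (g : 'M[o]_n) => GL_mem pi l g) (fun n (X : 'M[o]_n) => gl_mem pi l X)).
  + by move=> n; exists 1%:M; split; rewrite mulmx1; apply: cg_refl.
  + by move=> n g g'; apply: GL_cong.
  + by move=> n1 n2 g1 g2; apply: GL_block.
  + by move=> n g g'; apply: GL_mul.
  + by [].
  + by [].
  + by [].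
  + move=> k A B C D Y Z Hk0 _ _ _ _ _ _; exists Z; split; last exact: cg_refl.
    set M := (_ *: _).
    have HM : map_mx rr M = 0.
      by rewrite /M map_mxZ rmorphM rmorphXn Hpo expr0n /= gtn_eqF // mul0r scale0r.
    have [C1 C2] := cay_inv Huo HM.
    by exists (cay (- M)); split; apply: cg_eq.
- move=> _ _.
  apply: (@levi_gen O K red (iota pi) l HuO HkO HpO H2O Hl d1 d2 xi1 xi2 Hcop
            (fun n (g : 'M[O]_n) => GU_mem sigma (iota pi) l g)
            (fun n (X : 'M[O]_n) => gu_mem sigma (iota pi) l X)).
  + by move=> n; apply: GU_1.
  + by move=> n g g'; apply: GU_cong.
  + by move=> n1 n2 g1 g2; apply: GU_block.
  + by move=> n g g'; apply: GU_mul.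
  + by move=> n X X'; apply: gu_cong.
  + by move=> n1 n2 X1 X2; apply: gu_block.
  + by move=> n g h X; apply: gu_conj.
  + by move=> k A B C D Y Z; apply: (GU_HS sinv Hsp HuO HpO H2O pn0O Hcop).
Qed.
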